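(* Let $\mathbb{R}^n_s$ be $\mathbb{R}^n$ with a non-degenerate symmetric bilinear form $\langle\cdot,\cdot\rangle$ of signature $(n-s,s)$, let $G\subset\mathrm{Iso}(\mathbb{R}^n_s)$ be a real Zariski-closed subgroup whose centralizer in $\mathrm{Iso}(\mathbb{R}^n_s)$ acts transitively on $\mathbb{R}^n$, and let $\mathfrak{g}$ be its Lie algebra with the symmetric bilinear form $(\cdot,\cdot)$ induced by the orbit metric. Then the commutator subalgebra $[\mathfrak{g},\mathfrak{g}]$ is totally isotropic with respect to $(\cdot,\cdot)$, and the center $\mathfrak{z}(\mathfrak{g})$ is orthogonal to $[\mathfrak{g},\mathfrak{g}]$.
   Context: Elements of $\mathfrak{g}$ are written $(A,v)$ (matrices $\begin{pmatrix}A&v\\0&0\end{pmatrix}$). For fixed $p\in\mathbb{R}^n$, the orbit metric form on $\mathfrak{g}$ is $(X,Y)=\langle A_Xp+v_X,\,A_Yp+v_Y\rangle$ for $X=(A_X,v_X)$, $Y=(A_Y,v_Y)$, i.e. the pullback of $\langle\cdot,\cdot\rangle$ on the orbit $G.p$ via the orbit map; it is invariant: $([X,Y],Z)=-(Y,[X,Z])$ for all $X,Y,Z\in\mathfrak{g}$. The group $G$ (and $\mathfrak{g}$) is 2-step nilpotent. *)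

(* Defs.v *)
From HB Require Import structures.
From mathcomp Require Import all_boot all_order all_algebra.
From mathcomp Require Import all_classical all_reals all_analysis.
Set Implicit Arguments. Unset Strict Implicit. Unset Printing Implicit Defensive.
Import Order.TTheory GRing.Theory Num.Theory.
Local Open Scope ring_scope.
Local Open Scope classical_set_scope.

Section Defs.
Variables (R : realType) (n : nat).

(* Affine maps of R^n are represented as (n+1)x(n+1) matrices
   [[A, v], [0, 1]] acting on columns (x; 1); Lie algebra elements (A,v)
   are the matrices [[A, v], [0, 0]]. *)
Notation M := 'M[R]_(n + 1).

Definition linpart (X : M) : 'M[R]_n := ulsubmx X.
Definition transpart (X : M) : 'cV[R]_n := ursubmx X.

Definition bform (J : 'M[R]_n) (x y : 'cV[R]_n) : R := (x^T *m J *m y) 0 0.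

Definition nondeg_sym (J : 'M[R]_n) : Prop := J^T = J /\ J \in unitmx.

Definition Iso (J : 'M[R]_n) : set M :=
  [set g | exists (A : 'M[R]_n) (v : 'cV[R]_n),
      g = block_mx A v 0 1 /\ A^T *m J *m A = J].

Definition act (g : M) (x : 'cV[R]_n) : 'cV[R]_n :=
  linpart g *m x + transpart g.

Definition is_subgroup (G : set M) : Prop :=
  G 1%:M /\ (forall g h, G g -> G h -> G (g *m h)) /\
  (forall g, G g -> g \in unitmx /\ G (invmx g)).

Inductive pterm : Type :=
| PConst of R
| PVar of 'I_(n + 1) & 'I_(n + 1)
| PAdd of pterm & pterm
| PMul of pterm & pterm.

Fixpoint peval (p : pterm) (g : M) : R :=
  match p with
  | PConst c => c
  | PVar i j => g i j
  | PAdd p q => peval p g + peval q g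
  | PMul p q => peval p g * peval q g
  end.

Definition zariski_closed (G : set M) : Prop :=
  exists P : set pterm, G = [set g | forall p, P p -> peval p g = 0].

Definition centralizer_in_Iso (J : 'M[R]_n) (G : set M) : set M :=
  [set h | Iso J h /\ forall g, G g -> h *m g = g *m h].

Definition transitive_on_Rn (C : set M) : Prop :=
  forall x y : 'cV[R]_n, exists h, C h /\ act h x = y.

Definition expm (X : M) : M :=
  \matrix_(i, j) (limn (fun N : nat =>
     ((\sum_(k < N) (k`!%:R)^-1 *: X ^+ k) i j : R^o)) : R).

Definition lie_alg (G : set M) : set M :=
  [set X | forall t : R, G (expm (t *: X))].

Definition lie_bracket (X Y : M) : M := X *m Y - Y *m X.

Definition derived_alg (g : set M) : set M :=
  [set Z | exists (k : nat) (c : 'I_k -> R) (X Y : 'I_k -> M),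
      (forall i, g (X i) /\ g (Y i)) /\
      Z = \sum_(i < k) c i *: lie_bracket (X i) (Y i)].

Definition center_alg (g : set M) : set M :=
  [set Z | g Z /\ forall X, g X -> lie_bracket Z X = 0].

Definition orbit_form (J : 'M[R]_n) (p : 'cV[R]_n) (X Y : M) : R :=
  bform J (linpart X *m p + transpart X) (linpart Y *m p + transpart Y).

End Defs.

(* Main.v *)
Require Import Defs.
From HB Require Import structures.
From mathcomp Require Import all_boot all_order all_algebra.
From mathcomp Require Import all_classical all_reals all_analysis.
From mathcomp Require Import ring lra.
Import Order.TTheory GRing.Theory Num.Theory.
Import numFieldNormedType.Exports.
Local Open Scope ring_scope.
Local Open Scope classical_set_scope.

Set Implicit Arguments.
Section S.
Context {R : realType}.

Lemma geom_le2 (b : R) N : 0 <= b <= 2^-1 -> \sum_(0 <= k < N) b ^+ k <= 2.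
Proof.
case/andP=> b0 b1; elim: N => [|N IH]; first by rewrite big_geq.
rewrite big_nat_recl //.
under eq_bigr do rewrite exprS.
rewrite -mulr_sumr expr0.
have h : b * \sum_(0 <= i < N) b ^+ i <= 2^-1 * 2.
  by apply: ler_pM => //; apply: sumr_ge0 => i _; apply: exprn_ge0.
rewrite mulVf // in h; rewrite -[2 in leRHS]/(1+1); by rewrite lerD2l.
Qed.

Lemma series_bound (c : nat -> R) (b : R) : 0 <= b <= 2^-1 ->
  (forall k, (2 <= k)%N -> `|c k| <= b ^+ k) ->
  cvgn (series c) /\ `|limn (series c) - c 0%N - c 1%N| <= 2 * b ^+ 2.
Proof.
move=> hb hc.
have hb0 : 0 <= b by case/andP: hb.
have tail : forall N, `|series c N.+2 - c 0%N - c 1%N| <= 2 * b ^+ 2.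
  move=> N; rewrite /series /= big_nat_recl // big_nat_recl //.
  set S := \sum_(0 <= i < N) _.
  have -> : c 0%N + (c 1%N + S) - c 0%N - c 1%N = S by ring.
  apply: le_trans (ler_norm_sum _ _ _) _.
  apply: (@le_trans _ _ (\sum_(0 <= i < N) b ^+ 2 * b ^+ i)).
    by apply: ler_sum => i _; rewrite -exprD addnC addn2; apply: hc.
  rewrite -mulr_sumr mulrC; apply: ler_pM => //; first by apply: sumr_ge0 => i _; apply: exprn_ge0.
    by apply: exprn_ge0.
  exact: geom_le2.
have cn : cvgn (series c).
  apply: normed_cvg; apply: nondecreasing_is_cvgn.
    by apply: nondecreasing_series => k _ _; apply: normr_ge0.
  exists (`|c 0%N| + `|c 1%N| + 2 * b ^+ 2) => _ [N _ <-] /=.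
  apply: (@le_trans _ _ (\sum_(0 <= k < N.+2) `|c k|)).
    rewrite (big_cat_nat (n := N)) //= ?lerDl; last by rewrite leqW.
    by apply: sumr_ge0 => i _; apply: normr_ge0.
  rewrite big_nat_recl // big_nat_recl // addrA lerD2l.
  apply: (@le_trans _ _ (\sum_(0 <= i < N) b ^+ 2 * b ^+ i)).
    by apply: ler_sum => i _; rewrite -exprD addnC addn2; apply: hc.
  rewrite -mulr_sumr mulrC; apply: ler_pM => //; first by apply: sumr_ge0 => i _; apply: exprn_ge0.
    by apply: exprn_ge0.
  exact: geom_le2.
split => //.
have key : forall N, (2 <= N)%N -> `|series c N - c 0%N - c 1%N| <= 2 * b ^+ 2.
  by move=> [|[|N]] //= _; apply: tail.
rewrite ler_norml; apply/andP; split.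
  rewrite lerBrDr lerBrDr; apply: limr_ge => //; near=> N.
  have hN : (2 <= N)%N by near: N; exists 2%N.
  have := key N hN; rewrite ler_norml => /andP[h _].
  by rewrite -lerBrDr -lerBrDr.
rewrite lerBlDr lerBlDr; apply: limr_le => //; near=> N.
have hN : (2 <= N)%N by near: N; exists 2%N.
have := key N hN; rewrite ler_norml => /andP[_ h].
by rewrite -lerBlDr -lerBlDr.
Unshelve. all: by end_near. Qed.
Lemma le_sum_one (I : finType) (F : I -> R) k : (forall i, 0 <= F i) -> F k <= \sum_i F i.
Proof. by move=> h; rewrite (bigD1 k) //= lerDl sumr_ge0. Qed.
Arguments le_sum_one {I} F k.

Definition nm m1 m2 (A : 'M[R]_(m1, m2)) : R := \sum_i \sum_j `|A i j|.

Lemma nm_ge0 m1 m2 (A : 'M[R]_(m1, m2)) : 0 <= nm A.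
Proof. by apply: sumr_ge0 => i _; apply: sumr_ge0 => j _. Qed.

Lemma entry_le_nm m1 m2 (A : 'M[R]_(m1, m2)) i j : `|A i j| <= nm A.
Proof.
apply: (le_trans (le_sum_one (fun j => `|A i j|) j (fun _ => normr_ge0 _))).
exact: (le_sum_one (fun i => \sum_j `|A i j|) i (fun _ => sumr_ge0 _ (fun _ _ => normr_ge0 _))).
Qed.

Lemma nm_le_entries m1 m2 (A : 'M[R]_(m1, m2)) e :
  (forall i j, `|A i j| <= e) -> nm A <= m1%:R * m2%:R * e.
Proof.
move=> h; apply: (@le_trans _ _ (\sum_(i < m1) \sum_(j < m2) e)).
  by apply: ler_sum => i _; apply: ler_sum => j _.
by rewrite !sumr_const !card_ord -natrM mulr_natl -mulrnA mulnC.
Qed.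

Lemma nm_eq0 m1 m2 (A : 'M[R]_(m1, m2)) : nm A <= 0 -> A = 0.
Proof.
move=> h; apply/matrixP => i j; rewrite mxE; apply/normr0_eq0.
by apply/le_anti; rewrite normr_ge0 andbT (le_trans (entry_le_nm _ i j)).
Qed.

Lemma nm_add m1 m2 (A B : 'M[R]_(m1, m2)) : nm (A + B) <= nm A + nm B.
Proof.
rewrite /nm -big_split /=; apply: ler_sum => i _; rewrite -big_split /=.
by apply: ler_sum => j _; rewrite mxE ler_normD.
Qed.

Lemma nm_opp m1 m2 (A : 'M[R]_(m1, m2)) : nm (- A) = nm A.
Proof. by apply: eq_bigr => i _; apply: eq_bigr => j _; rewrite mxE normrN. Qed.

Lemma nm_scale m1 m2 (a : R) (A : 'M[R]_(m1, m2)) : nm (a *: A) = `|a| * nm A.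
Proof.
rewrite /nm mulr_sumr; apply: eq_bigr => i _; rewrite mulr_sumr.
by apply: eq_bigr => j _; rewrite mxE normrM.
Qed.

Lemma nm_tr m1 m2 (A : 'M[R]_(m1, m2)) : nm A^T = nm A.
Proof. by rewrite /nm exchange_big; apply: eq_bigr => i _; apply: eq_bigr => j _; rewrite mxE. Qed.

Lemma nm_mul m1 m2 m3 (A : 'M[R]_(m1, m2)) (B : 'M[R]_(m2, m3)) :
  nm (A *m B) <= nm A * nm B.
Proof.
rewrite /nm mulr_suml; apply: ler_sum => i _.
apply: (@le_trans _ _ (\sum_j \sum_l `|A i l| * `|B l j|)).
  by apply: ler_sum => j _; rewrite mxE; apply: (le_trans (ler_norm_sum _ _ _));
    apply: ler_sum => l _; rewrite normrM.
rewrite exchange_big mulr_suml /=; apply: ler_sum => l _.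
rewrite -mulr_sumr; apply: ler_pM => //; first by apply: sumr_ge0.
rewrite (bigD1 l) //= lerDl; by apply: sumr_ge0 => k _; apply: sumr_ge0.
Qed.

Lemma nm_sub m1 m2 p1 p2 (A : 'M[R]_(m1, m2)) (f : 'I_p1 -> 'I_m1) (g : 'I_p2 -> 'I_m2) :
  nm (\matrix_(i, j) A (f i) (g j)) <= p1%:R * p2%:R * nm A.
Proof. by apply: nm_le_entries => i j; rewrite mxE; apply: entry_le_nm. Qed.

Definition small m1 m2 (F : R -> 'M[R]_(m1, m2)) :=
  exists d K, 0 < d /\ forall t, 0 < t < d -> nm (F t) <= K * t ^+ 2.

Lemma small_le1 m1 m2 (F : R -> 'M[R]_(m1, m2)) : small F ->
  exists d K, [/\ 0 < d, d <= 1, 0 <= K & forall t, 0 < t < d -> nm (F t) <= K * t ^+ 2].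
Proof.
case=> d [K [d0 h]]; exists (Num.min d 1), `|K|; split => //.
- by rewrite lt_min d0 ltr01.
- by rewrite ge_min lexx orbT.
move=> t /andP[t0]; rewrite lt_min => /andP[td _].
apply: le_trans (h t _) _; first by rewrite t0 td.
by apply: ler_wpM2r; [apply: exprn_ge0; apply: ltW | apply: ler_norm].
Qed.

Lemma small_ext m1 m2 (F G : R -> 'M[R]_(m1, m2)) :
  (forall t, 0 < t -> F t = G t) -> small F -> small G.
Proof.
move=> e [d [K [d0 h]]]; exists d, K; split => // t /andP[t0 td].
by rewrite -e //; apply: h; rewrite t0 td.
Qed.

Lemma small_add m1 m2 (F G : R -> 'M[R]_(m1, m2)) :
  small F -> small G -> small (fun t => F t + G t).
Proof.
case=> d1 [K1 [d10 h1]] [d2 [K2 [d20 h2]]].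
exists (Num.min d1 d2), (K1 + K2); split; first by rewrite lt_min d10 d20.
move=> t /andP[t0]; rewrite lt_min => /andP[t1 t2].
apply: le_trans (nm_add _ _) _; rewrite mulrDl; apply: lerD.
  by apply: h1; rewrite t0 t1.
by apply: h2; rewrite t0 t2.
Qed.

Lemma small_opp m1 m2 (F : R -> 'M[R]_(m1, m2)) :
  small F -> small (fun t => - F t).
Proof. by case=> d [K [d0 h]]; exists d, K; split => // t ht; rewrite nm_opp h. Qed.

Lemma small_tr m1 m2 (F : R -> 'M[R]_(m1, m2)) :
  small F -> small (fun t => (F t)^T).
Proof. by case=> d [K [d0 h]]; exists d, K; split => // t ht; rewrite nm_tr h. Qed.

Lemma small_mull m1 m2 m3 (C : 'M[R]_(m1, m2)) (F : R -> 'M[R]_(m2, m3)) :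
  small F -> small (fun t => C *m F t).
Proof.
case=> d [K [d0 h]]; exists d, (nm C * K); split => // t ht.
apply: le_trans (nm_mul _ _) _; rewrite -mulrA; apply: ler_wpM2l; first exact: nm_ge0.
exact: h.
Qed.

Lemma small_mulr m1 m2 m3 (F : R -> 'M[R]_(m1, m2)) (C : 'M[R]_(m2, m3)) :
  small F -> small (fun t => F t *m C).
Proof.
case=> d [K [d0 h]]; exists d, (nm C * K); split => // t ht.
apply: le_trans (nm_mul _ _) _; rewrite mulrC -mulrA; apply: ler_wpM2l; first exact: nm_ge0.
exact: h.
Qed.

Lemma small_mul m1 m2 m3 (F : R -> 'M[R]_(m1, m2)) (G : R -> 'M[R]_(m2, m3)) :
  small F -> small G -> small (fun t => F t *m G t).
Proof.
move=> /small_le1 [d1 [K1 [d10 d11 K10 h1]]] /small_le1 [d2 [K2 [d20 d21 K20 h2]]].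
exists (Num.min d1 d2), (K1 * K2); split; first by rewrite lt_min d10 d20.
move=> t /andP[t0]; rewrite lt_min => /andP[t1 t2].
have e1 : nm (F t) <= K1 * t ^+ 2 by apply: h1; rewrite t0 t1.
have e2 : nm (G t) <= K2 * t ^+ 2 by apply: h2; rewrite t0 t2.
apply: (le_trans (nm_mul (F t) (G t))).
apply: le_trans (ler_pM (nm_ge0 _) (nm_ge0 _) e1 e2) _.
have tt1 : t ^+ 2 <= 1 by rewrite expr_le1 // ?ltW // (lt_le_trans t1 d11).
have := ler_wpM2l (mulr_ge0 (mulr_ge0 K10 K20) (exprn_ge0 2 (ltW t0))) tt1.
by rewrite mulr1 => hh; apply: le_trans hh; rewrite le_eqVlt; apply/orP; left; apply/eqP; ring.
Qed.

Lemma small_scalet m1 m2 (F : R -> 'M[R]_(m1, m2)) :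
  small F -> small (fun t => t *: F t).
Proof.
move=> /small_le1 [d [K [d0 d1 K0 h]]]; exists d, K; split => // t /andP[t0 td].
rewrite nm_scale ger0_norm; last exact: ltW.
have ht : nm (F t) <= K * t ^+ 2 by apply: h; rewrite t0 td.
apply: le_trans (ler_wpM2l (ltW t0) ht) _.
apply: ler_piMl; first by apply: mulr_ge0 => //; apply: exprn_ge0; apply: ltW.
by apply: ltW; apply: lt_le_trans td d1.
Qed.

Lemma small_t2 m1 m2 (C : 'M[R]_(m1, m2)) : small (fun t => t ^+ 2 *: C).
Proof.
exists 1, (nm C); split => // t /andP[t0 _].
rewrite nm_scale ger0_norm; first by rewrite mulrC.
by apply: exprn_ge0; apply: ltW.
Qed.

Lemma small_sub m1 m2 p1 p2 (F : R -> 'M[R]_(m1, m2)) (f : 'I_p1 -> 'I_m1) (g : 'I_p2 -> 'I_m2) :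
  small F -> small (fun t => \matrix_(i, j) F t (f i) (g j)).
Proof.
case=> d [K [d0 h]]; exists d, (p1%:R * p2%:R * K); split => // t ht.
apply: le_trans (nm_sub _ f g) _; rewrite -(mulrA (p1%:R * p2%:R)); apply: ler_wpM2l; first by apply: mulr_ge0.
exact: h.
Qed.

Lemma small_pos (x K d : R) : 0 <= x -> 0 < d -> (forall t, 0 < t < d -> x <= K * t) -> x = 0.
Proof.
move=> x0 d0 h; apply/eqP; rewrite eq_le x0 andbT; rewrite leNgt; apply/negP => xp.
pose u := x / (2 * (`|K| + 1)).
have Kp : 0 < 2 * (`|K| + 1) by apply: mulr_gt0 => //; apply: ltr_wpDl.
have u0 : 0 < u by apply: divr_gt0.
have ue : u * (2 * (`|K| + 1)) = x by rewrite /u mulfVK // gt_eqF.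
pose t := Num.min (d / 2) u.
have t0 : 0 < t by rewrite lt_min u0 divr_gt0.
have tu : t <= u by rewrite ge_min lexx orbT.
have td : t < d by apply: (le_lt_trans (y := d / 2)); [rewrite ge_min lexx | rewrite ltr_pdivrMr // ltr_pMr // ltr1n].
have := h t _; rewrite t0 td => /(_ isT) hx.
have hK : K * t <= `|K| * t by apply: ler_wpM2r; [apply: ltW | apply: ler_norm].
have hK2 : `|K| * t <= `|K| * u by apply: ler_wpM2l.
have Kn := normr_ge0 K.
nra.
Qed.

Lemma small_lin m1 m2 (L : 'M[R]_(m1, m2)) F d0 : 0 < d0 ->
  (forall t, 0 < t < d0 -> t *: L + F t = 0) -> small F -> L = 0.
Proof.
move=> d00 e [d [K [d1 h]]]; apply: nm_eq0.
suff -> : nm L = 0 by [].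
apply: (@small_pos _ K (Num.min d d0)); first exact: nm_ge0.
  by rewrite lt_min d1 d00.
move=> t /andP[t0]; rewrite lt_min => /andP[td td0].
have : t *: L = - F t by apply/eqP; rewrite -subr_eq0 opprK; apply/eqP; apply: e; rewrite t0 td0.
move/(congr1 (@nm m1 m2)); rewrite nm_scale nm_opp ger0_norm; last exact: ltW.
move=> eL.
have := h t _; rewrite t0 td => /(_ isT); rewrite -eL expr2 mulrA => hh.
by rewrite -(ler_pM2r t0) mulrC.
Qed.

End S.

Unset Implicit Arguments.
Section E.
Variables (R : realType) (n : nat).
Local Notation M := 'M[R]_(n + 1).

Lemma nm_exp (X : M) k : nm (X ^+ k.+1) <= nm X ^+ k.+1.
Proof.
elim: k => [|k IH]; first by rewrite !expr1.
rewrite exprSr [nm X ^+ _]exprSr.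
apply: le_trans (nm_mul (X ^+ k.+1) X) _.
by apply: ler_wpM2r => //; apply: nm_ge0.
Qed.

Lemma scale_exp (t : R) (X : M) k : (t *: X) ^+ k = t ^+ k *: X ^+ k.
Proof.
elim: k => [|k IH]; first by rewrite !expr0 scale1r.
by rewrite !exprS IH -!mulmxE -scalemxAl -scalemxAr scalerA.
Qed.

Lemma expm_entry (X : M) (t : R) i j :
  expm (t *: X) i j = limn (series (fun k => (k`!%:R)^-1 * (t ^+ k * (X ^+ k) i j))).
Proof.
rewrite /expm mxE.
congr (lim (_ @ \oo)).
apply/funext => N; rewrite /series /= summxE big_mkord; apply: eq_bigr => k _.
by rewrite !mxE scale_exp mxE.
Qed.

Lemma expm_small (X : M) : small (fun t => expm (t *: X) - 1%:M - t *: X).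
Proof.
pose a := nm X.
have a0 : 0 <= a by apply: nm_ge0.
exists ((2 * (a + 1))^-1), ((n + 1)%:R * (n + 1)%:R * (2 * a ^+ 2)); split.
  by rewrite invr_gt0 mulr_gt0 // ltr_wpDl.
move=> t /andP[t0 td].
have hb : 0 <= t * a <= 2^-1.
  apply/andP; split; first by apply: mulr_ge0 => //; apply: ltW.
  have h1 : t * a <= (2 * (a + 1))^-1 * a by apply: ler_wpM2r => //; apply: ltW.
  apply: le_trans h1 _.
  set u := (2 * (a + 1))^-1.
  have hu : u * (2 * (a + 1)) = 1 by rewrite mulVf // mulf_neq0 // gt_eqF // ltr_wpDl.
  have u0 : 0 <= u by rewrite invr_ge0 mulr_ge0 // addr_ge0.
  nra.
set b := t * a.
have hent : forall i j, `|(expm (t *: X) - 1%:M - t *: X) i j| <= 2 * b ^+ 2.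
  move=> i j.
  pose c := fun k : nat => (k`!%:R)^-1 * (t ^+ k * (X ^+ k) i j).
  have hck : forall k, (2 <= k)%N -> `|c k| <= b ^+ k.
    move=> [|k] // _.
    rewrite /c normrM normrM normrX (ger0_norm (ltW t0)) /b exprMn.
    rewrite -[_ ^+ _ * _ in leRHS]mul1r.
    apply: ler_pM.
    - exact: normr_ge0.
    - by apply: mulr_ge0; [apply: exprn_ge0; apply: ltW | exact: normr_ge0].
    - rewrite ger0_norm ?invr_ge0 // invf_le1 ?ltr0n ?fact_gt0 //.
      by rewrite ler1n fact_gt0.
    apply: ler_wpM2l; first by apply: exprn_ge0; apply: ltW.
    apply: le_trans (entry_le_nm _ i j) _.
    exact: nm_exp.
  have [_ hc] := @series_bound _ c b hb hck.
  have e : (expm (t *: X) - 1%:M - t *: X) i j = limn (series c) - c 0%N - c 1%N.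
    have -> : (expm (t *: X) - 1%:M - t *: X) i j = expm (t *: X) i j - (1%:M : M) i j - (t *: X) i j.
      by rewrite !mxE.
    rewrite expm_entry /c /= !expr0 !expr1 invr1 !mul1r.
    by rewrite [(t *: X) i j]mxE.
  by rewrite e.
apply: le_trans (nm_le_entries _ _ hent) _.
rewrite le_eqVlt; apply/orP; left; apply/eqP; rewrite /b; ring.
Qed.

End E.

Set Implicit Arguments.
Section L.
Variables (R : realType) (n : nat).
Local Notation M := 'M[R]_(n + 1).

Lemma small_mxsub m1 m2 p1 p2 (F : R -> 'M[R]_(m1, m2)) (f : 'I_p1 -> 'I_m1) (g : 'I_p2 -> 'I_m2) :
  small F -> small (fun t => mxsub f g (F t)).
Proof. by move=> sF; apply: (small_ext _ _ (small_sub f g sF)) => t _; apply/matrixP => i j; rewrite !mxE. Qed.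

Lemma small_ul (F : R -> M) : small F -> small (fun t => ulsubmx (F t)).
Proof. by move=> sF; apply: (small_ext _ _ (small_mxsub _ _ sF)) => t _; rewrite ulsubmxEsub. Qed.
Lemma small_dl (F : R -> M) : small F -> small (fun t => dlsubmx (F t)).
Proof. by move=> sF; apply: (small_ext _ _ (small_mxsub _ _ sF)) => t _; rewrite dlsubmxEsub. Qed.
Lemma small_dr (F : R -> M) : small F -> small (fun t => drsubmx (F t)).
Proof. by move=> sF; apply: (small_ext _ _ (small_mxsub _ _ sF)) => t _; rewrite drsubmxEsub. Qed.

Lemma lie_comm (X h : M) :
  (forall t, 0 < t -> h *m expm (t *: X) = expm (t *: X) *m h) -> h *m X = X *m h.
Proof.
move=> heq; apply/eqP; rewrite -subr_eq0; apply/eqP.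
pose F := fun t => expm (t *: X) - 1%:M - t *: X.
have sF : small F := @expm_small R n X.
apply: (@small_lin _ _ _ _ (fun t => h *m F t - F t *m h) 1) => //.
  move=> t /andP[t0 _]; rewrite /F !mulmxBr !mulmxBl mulmx1 mul1mx -scalemxAl -scalemxAr heq //.
  by apply/matrixP => i j; rewrite !mxE; ring.
exact: small_add (small_mull h sF) (small_opp (small_mulr h sF)).
Qed.

Lemma iso_expand m (J A Fu : 'M[R]_m) (t : R) :
  (1%:M + t *: A + Fu)^T *m J *m (1%:M + t *: A + Fu) - J - t *: (A^T *m J + J *m A) =
  t ^+ 2 *: (A^T *m J *m A) + (Fu^T *m J + t *: (Fu^T *m J *m A) + Fu^T *m J *m Fu)
  + (J *m Fu + t *: (A^T *m J *m Fu)).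
Proof.
rewrite !linearD /= linearZ /= trmx1.
rewrite ?(mulmxDl, mulmxDr, mul1mx, mulmx1).
rewrite -?(scalemxAl, scalemxAr) ?scalerA ?mulmxA.
by apply/matrixP => i j; rewrite !mxE; ring.
Qed.

Lemma mxsub_lin m1 m2 p1 p2 (f : 'I_p1 -> 'I_m1) (g : 'I_p2 -> 'I_m2) (U V W : 'M[R]_(m1, m2)) (t : R) :
  mxsub f g (U + t *: V + W) = mxsub f g U + t *: mxsub f g V + mxsub f g W.
Proof. by apply/matrixP => i j; rewrite !mxE. Qed.

Lemma lie_iso (J : 'M[R]_n) (X : M) : (forall t, 0 < t -> Iso J (expm (t *: X))) ->
  [/\ dlsubmx X = 0, drsubmx X = 0 & (ulsubmx X)^T *m J + J *m ulsubmx X = 0].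
Proof.
move=> hI.
pose F := fun t => expm (t *: X) - 1%:M - t *: X.
have sF : small F := @expm_small R n X.
have hE : forall t, expm (t *: X) = 1%:M + t *: X + F t.
  by move=> t; rewrite /F; apply/matrixP => i j; rewrite !mxE; ring.
split.
- apply: (@small_lin _ _ _ _ (fun t => dlsubmx (F t)) 1) => //; last exact: small_dl.
  move=> t /andP[t0 _]; case: (hI t t0) => B [w [hB _]].
  have := congr1 dlsubmx hB; rewrite block_mxKdl hE !dlsubmxEsub mxsub_lin -dlsubmxEsub.
  by rewrite scalar_mx_block block_mxKdl add0r.
- apply: (@small_lin _ _ _ _ (fun t => drsubmx (F t)) 1) => //; last exact: small_dr.
  move=> t /andP[t0 _]; case: (hI t t0) => B [w [hB _]].
  have := congr1 drsubmx hB; rewrite block_mxKdr hE !drsubmxEsub mxsub_lin -drsubmxEsub.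
  rewrite scalar_mx_block block_mxKdr -addrA => h.
  by apply: (addrI 1%:M); rewrite addr0.
set A := ulsubmx X.
pose Fu := fun t => ulsubmx (F t).
have sFu : small Fu := small_ul sF.
apply: (@small_lin _ _ _ _ (fun t => (1%:M + t *: A + Fu t)^T *m J *m (1%:M + t *: A + Fu t) - J - t *: (A^T *m J + J *m A)) 1) => //.
  move=> t /andP[t0 _]; case: (hI t t0) => B [w [hB hBJ]].
  have : B = 1%:M + t *: A + Fu t.
    have := congr1 ulsubmx hB; rewrite block_mxKul hE !ulsubmxEsub mxsub_lin -!ulsubmxEsub.
    by rewrite scalar_mx_block block_mxKul.
  move=> <-; rewrite hBJ.
  by apply/matrixP => i j; rewrite !mxE; ring.
apply: (small_ext _ (fun t _ => esym (iso_expand J A (Fu t) t))).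
apply: small_add; first apply: small_add.
- exact: small_t2.
- apply: small_add; first apply: small_add.
  + exact: small_mulr (small_tr sFu).
  + exact: small_scalet (small_mulr _ (small_mulr _ (small_tr sFu))).
  + exact: small_mul (small_mulr _ (small_tr sFu)) sFu.
- apply: small_add; first exact: small_mull.
  exact: small_scalet (small_mull _ sFu).
Qed.

End L.

Unset Implicit Arguments.
Set Implicit Arguments.
Section B.
Variables (R : realType) (n : nat) (J : 'M[R]_n).
Hypothesis hJs : J^T = J.
Hypothesis hJu : J \in unitmx.
Local Notation bf := (bform J).

Lemma bformDl x y z : bf (x + y) z = bf x z + bf y z.
Proof. by rewrite /bform linearD /= !mulmxDl mxE. Qed.
Lemma bformDr x y z : bf z (x + y) = bf z x + bf z y.
Proof. by rewrite /bform !mulmxDr mxE. Qed.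
Lemma bformZl (a : R) x z : bf (a *: x) z = a * bf x z.
Proof. by rewrite /bform linearZ /= -!scalemxAl mxE. Qed.
Lemma bformZr (a : R) x z : bf z (a *: x) = a * bf z x.
Proof. by rewrite /bform -!scalemxAr mxE. Qed.
Lemma bformNl x z : bf (- x) z = - bf x z.
Proof. by rewrite -scaleN1r bformZl mulN1r. Qed.
Lemma bformNr x z : bf z (- x) = - bf z x.
Proof. by rewrite -scaleN1r bformZr mulN1r. Qed.
Lemma bform_sym x y : bf x y = bf y x.
Proof.
rewrite /bform; transitivity ((x^T *m J *m y)^T 0 0); first by rewrite [in RHS]mxE.
by rewrite trmx_mul trmx_mul trmxK hJs mulmxA.
Qed.
Lemma bform_skew (A : 'M[R]_n) x y : A^T *m J + J *m A = 0 -> bf (A *m x) y = - bf x (A *m y).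
Proof.
move=> hA.
have hAJ : A^T *m J = - (J *m A) by apply/eqP; rewrite -subr_eq0 opprK hA.
by rewrite /bform trmx_mul -(mulmxA x^T A^T J) hAJ mulmxN mulNmx mxE !mulmxA.
Qed.
Lemma bform_iso (B : 'M[R]_n) x y : B^T *m J *m B = J -> bf (B *m x) (B *m y) = bf x y.
Proof. by move=> hB; rewrite /bform trmx_mul !mulmxA -(mulmxA x^T) -(mulmxA x^T) hB. Qed.
Lemma bform_nondeg u : (forall w, bf w u = 0) -> u = 0.
Proof.
move=> h.
have Ju : J *m u = 0.
  apply/matrixP => i j; rewrite (ord1 j) !mxE.
  by have := h (delta_mx i 0); rewrite /bform trmx_delta -mulmxA -rowE !mxE.
by rewrite -(mulKmx hJu u) Ju mulmx0.
Qed.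
Lemma cV_eq0 (Z : 'M[R]_n) : (forall q : 'cV[R]_n, Z *m q = 0) -> Z = 0.
Proof.
move=> h; apply/matrixP => i j; have := h (delta_mx j 0); rewrite -colE => /matrixP/(_ i 0).
by rewrite !mxE.
Qed.
End B.

Unset Implicit Arguments.
Set Implicit Arguments.
Section C.
Variables (R : realType) (n : nat) (J : 'M[R]_n) (G : set 'M[R]_(n + 1)).
Local Notation M := 'M[R]_(n + 1).
Local Notation bf := (bform J).
Local Notation C := (centralizer_in_Iso J G).

Definition Vf (X : M) (q : 'cV[R]_n) := linpart X *m q + transpart X.

Definition good (X : M) := [/\ dlsubmx X = 0, drsubmx X = 0,
  (linpart X)^T *m J + J *m linpart X = 0 & forall h, C h -> h *m X = X *m h].

Lemma lie_good X : G `<=` Iso J -> lie_alg G X -> good X.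
Proof.
move=> GI hX.
have [h1 h2 h3] := lie_iso (fun t _ => GI _ (hX t)).
split => // h [_ hc]; apply: lie_comm => t _; exact: hc.
Qed.

Lemma block_of (X : M) : dlsubmx X = 0 -> drsubmx X = 0 ->
  X = block_mx (linpart X) (transpart X) 0 0.
Proof. by move=> h1 h2; rewrite -{1}(submxK X) h1 h2. Qed.

Lemma bracket_block (X Y : M) : good X -> good Y ->
  lie_bracket X Y = block_mx (linpart X *m linpart Y - linpart Y *m linpart X)
     (linpart X *m transpart Y - linpart Y *m transpart X) 0 0.
Proof.
case=> hx1 hx2 _ _ [hy1 hy2 _ _].
set A := linpart X; set v := transpart X; set B := linpart Y; set w := transpart Y.
rewrite /lie_bracket [in LHS](block_of hx1 hx2) [in LHS](block_of hy1 hy2) -/A -/v -/B -/w !mulmx_block.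
rewrite !mulmx0 !mul0mx !addr0 opp_block_mx add_block_mx !subrr.
by [].
Qed.

Lemma good_parts X Y : good X -> good Y ->
  [/\ linpart (lie_bracket X Y) = linpart X *m linpart Y - linpart Y *m linpart X,
      transpart (lie_bracket X Y) = linpart X *m transpart Y - linpart Y *m transpart X,
      dlsubmx (lie_bracket X Y) = 0 & drsubmx (lie_bracket X Y) = 0].
Proof.
move=> gX gY; rewrite (bracket_block gX gY) /linpart /transpart.
by rewrite block_mxKul block_mxKur block_mxKdl block_mxKdr.
Qed.

Lemma Vf_bracket X Y q : good X -> good Y ->
  Vf (lie_bracket X Y) q = linpart X *m Vf Y q - linpart Y *m Vf X q.
Proof.
move=> gX gY; have [e1 e2 _ _] := good_parts gX gY.
rewrite /Vf e1 e2 !mulmxDr mulmxBl !mulmxA.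
by apply/matrixP => i j; rewrite !mxE; ring.
Qed.

Lemma comm3 (h X Y : M) : h *m X = X *m h -> h *m Y = Y *m h -> h *m (X *m Y) = X *m Y *m h.
Proof. by move=> hX hY; rewrite mulmxA hX -mulmxA hY mulmxA. Qed.

Lemma good_bracket X Y : good X -> good Y -> good (lie_bracket X Y).
Proof.
move=> gX gY; have [e1 e2 e3 e4] := good_parts gX gY.
case: gX => _ _ sA cX; case: gY => _ _ sB cY.
split => //.
  rewrite e1; set A := linpart X; set B := linpart Y.
  have hA : A^T *m J = - (J *m A) by apply/eqP; rewrite -subr_eq0 opprK sA.
  have hB : B^T *m J = - (J *m B) by apply/eqP; rewrite -subr_eq0 opprK sB.
  have f1 : B^T *m A^T *m J = J *m B *m A by rewrite -mulmxA hA mulmxN mulmxA hB mulNmx opprK.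
  have f2 : A^T *m B^T *m J = J *m A *m B by rewrite -mulmxA hB mulmxN mulmxA hA mulNmx opprK.
  rewrite linearB /= !trmx_mul mulmxBl f1 f2 mulmxBr !mulmxA.
  by apply/matrixP => i j; rewrite !mxE; ring.
move=> h hC; rewrite /lie_bracket mulmxBr mulmxBl.
by rewrite (comm3 (cX h hC) (cY h hC)) (comm3 (cY h hC) (cX h hC)).
Qed.

Lemma C_parts X h : good X -> C h -> exists B w,
  [/\ h = block_mx B w 0 1, B^T *m J *m B = J, B *m linpart X = linpart X *m B &
      B *m transpart X = linpart X *m w + transpart X].
Proof.
case=> d1 d2 _ cX hC; have e := cX h hC.
case: (hC) => [[B [w [hh hB]]] _]; exists B, w.
set A := linpart X; set v := transpart X.
have eX : X = block_mx A v 0 0 by exact: block_of.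
rewrite hh eX !mulmx_block in e.
move/eq_block_mx: e => [f1 f2 _ _].
split => //.
  by move: f1; rewrite !mulmx0 !addr0.
by move: f2; rewrite !mulmx0 mulmx1 addr0.
Qed.

Lemma C_comm X h B w : good X -> C h -> h = block_mx B w 0 1 ->
  B *m linpart X = linpart X *m B /\ B *m transpart X = linpart X *m w + transpart X.
Proof.
case=> d1 d2 _ cX hC hh; have e := cX h hC.
set A := linpart X; set v := transpart X.
have eX : X = block_mx A v 0 0 by exact: block_of.
rewrite hh eX !mulmx_block in e.
move/eq_block_mx: e => [f1 f2 _ _].
split.
  by move: f1; rewrite !mulmx0 !addr0.
by move: f2; rewrite !mulmx0 mulmx1 addr0.
Qed.

Lemma Vf_act X h B w q : good X -> C h -> h = block_mx B w 0 1 ->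
  Vf X (act h q) = B *m Vf X q.
Proof.
move=> gX hC hh; have [c1 c2] := C_comm gX hC hh.
rewrite /act /Vf hh /linpart /transpart block_mxKul block_mxKur.
rewrite -/(linpart X) -/(transpart X) in c1 c2 *.
rewrite mulmxDr mulmxA -c1 mulmxDr c2 -mulmxA addrA.
by [].
Qed.

Lemma F_const X Y p q : transitive_on_Rn C -> good X -> good Y ->
  bf (Vf X q) (Vf Y q) = bf (Vf X p) (Vf Y p).
Proof.
move=> htr gX gY; have [h [hC <-]] := htr p q.
case: (hC) => [[B [w [hh hB]]] _].
by rewrite (Vf_act _ gX hC hh) (Vf_act _ gY hC hh) bform_iso.
Qed.

Lemma Vf_shift X q w (s : R) : Vf X (q + s *: w) = Vf X q + s *: (linpart X *m w).
Proof. by rewrite /Vf mulmxDr scalemxAr addrAC. Qed.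

Hypothesis hJs : J^T = J.
Hypothesis hJu : J \in unitmx.
Hypothesis htr : transitive_on_Rn C.

Lemma F1 X Y q : good X -> good Y ->
  linpart X *m Vf Y q + linpart Y *m Vf X q = 0.
Proof.
move=> gX gY; apply: (@bform_nondeg R n J hJu) => w.
have e1 := F_const q (q + 1 *: w) htr gX gY.
have e2 := F_const q (q + (-1) *: w) htr gX gY.
rewrite !Vf_shift in e1 e2.
case: (gX) => _ _ sX _; case: (gY) => _ _ sY _.
have s1 := bform_skew w (Vf Y q) sX.
have s2 : bf (Vf X q) (linpart Y *m w) = - bf w (linpart Y *m Vf X q).
  by rewrite (bform_sym _ hJs); apply: bform_skew.
rewrite bformDr.
move: e1 e2 s1 s2; move: (Vf X q) (Vf Y q) => VX VY e1 e2 s1 s2.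
rewrite !bformDl !bformDr !bformZl !bformZr in e1 e2.
lra.
Qed.

Lemma anti X Y : good X -> good Y ->
  linpart X *m linpart Y = - (linpart Y *m linpart X).
Proof.
move=> gX gY.
have h0 := F1 0 gX gY; rewrite /Vf !mulmx0 !add0r in h0.
have Z0 : linpart X *m linpart Y + linpart Y *m linpart X = 0.
  apply: cV_eq0 => q; have hq := F1 q gX gY.
  rewrite /Vf !mulmxDr !mulmxA in hq.
  rewrite mulmxDl; apply/matrixP => i j.
  move/matrixP: hq => /(_ i j); move/matrixP: h0 => /(_ i j).
  rewrite !mxE => a b; lra.
by apply/eqP; rewrite -addr_eq0; apply/eqP.
Qed.

Lemma neg_of (x y : 'cV[R]_n) : x + y = 0 -> y = - x.
Proof. by move=> h; apply/eqP; rewrite -addr_eq0 addrC h. Qed.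
Lemma negm_of (x y : 'M[R]_n) : x = - y -> y = - x.
Proof. by move=> ->; rewrite opprK. Qed.

Lemma two_step a b c q : good a -> good b -> good c ->
  linpart a *m Vf (lie_bracket b c) q = 0.
Proof.
move=> ga gb gc.
have gbc := good_bracket gb gc.
have [lbc _ _ _] := good_parts gb gc.
have ac := neg_of (etrans (addrC _ _) (F1 q gc ga)).
have cb := neg_of (F1 q gb gc).
have ba := negm_of (anti ga gb).
have cb' := anti gc gb.
have h_a := F1 q ga gbc.
set y := linpart a *m (linpart b *m Vf c q).
have h1 : linpart a *m Vf (lie_bracket b c) q = y + y.
  by rewrite (Vf_bracket q gb gc) cb opprK mulmxDr.
have k : linpart b *m linpart c *m Vf a q = y.
  by rewrite -mulmxA ac mulmxN mulmxA ba mulNmx opprK -mulmxA.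
have h2 : linpart (lie_bracket b c) *m Vf a q = y + y.
  by rewrite lbc cb' opprK mulmxDl k.
rewrite h1 h2 in h_a; rewrite h1.
apply/matrixP => i j; move/matrixP: h_a => /(_ i j); rewrite !mxE => e; lra.
Qed.

Lemma bform0r x : bf x 0 = 0.
Proof. by rewrite /bform mulmx0 mxE. Qed.
Lemma bform0l x : bf 0 x = 0.
Proof. by rewrite /bform trmx0 !mul0mx mxE. Qed.

Lemma inv_form X Y q z : good X -> good Y ->
  bf (Vf (lie_bracket X Y) q) z = - (2 * bf (Vf Y q) (linpart X *m z)).
Proof.
move=> gX gY; rewrite (Vf_bracket q gX gY) (neg_of (F1 q gX gY)) opprK bformDl.
case: (gX) => _ _ sX _; rewrite (bform_skew _ _ sX).
lra.
Qed.

Lemma Vf0 q : Vf 0 q = 0.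
Proof.
rewrite /Vf.
have -> : linpart (0 : M) = 0 by apply/matrixP => i j; rewrite !mxE.
have -> : transpart (0 : M) = 0 by apply/matrixP => i j; rewrite !mxE.
by rewrite mul0mx addr0.
Qed.

Lemma central_zero Z X q : good Z -> good X -> lie_bracket Z X = 0 ->
  linpart X *m Vf Z q = 0.
Proof.
move=> gZ gX hZX; have e := Vf_bracket q gZ gX.
rewrite hZX Vf0 in e; have f := F1 q gZ gX.
apply/matrixP => i j; move/matrixP: e => /(_ i j); move/matrixP: f => /(_ i j).
rewrite !mxE => a b; lra.
Qed.

Lemma Vf_addZ (a : R) (X Y : M) q : Vf (a *: X + Y) q = a *: Vf X q + Vf Y q.
Proof.
rewrite /Vf.
have -> : linpart (a *: X + Y) = a *: linpart X + linpart Y by apply/matrixP => i j; rewrite !mxE.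
have -> : transpart (a *: X + Y) = a *: transpart X + transpart Y by apply/matrixP => i j; rewrite !mxE.
rewrite mulmxDl -scalemxAl scalerDr.
by apply/matrixP => i j; rewrite !mxE; ring.
Qed.

Lemma Vf_sum k (c : 'I_k -> R) (Ms : 'I_k -> M) q :
  Vf (\sum_(i < k) c i *: Ms i) q = \sum_(i < k) c i *: Vf (Ms i) q.
Proof.
apply: (big_rec2 (fun A B => Vf A q = B)); first exact: Vf0.
by move=> i A B _ <-; rewrite Vf_addZ.
Qed.

Lemma bf_suml k (c : 'I_k -> R) (x : 'I_k -> 'cV[R]_n) z :
  bf (\sum_(i < k) c i *: x i) z = \sum_(i < k) c i * bf (x i) z.
Proof.
apply: (big_rec2 (fun A B => bf A z = B)); first exact: bform0l.
by move=> i A B _ <-; rewrite bformDl bformZl.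
Qed.

Lemma bf_sumr k (c : 'I_k -> R) (x : 'I_k -> 'cV[R]_n) z :
  bf z (\sum_(i < k) c i *: x i) = \sum_(i < k) c i * bf z (x i).
Proof.
apply: (big_rec2 (fun A B => bf z A = B)); first exact: bform0r.
by move=> i A B _ <-; rewrite bformDr bformZr.
Qed.

End C.

Unset Implicit Arguments.
Theorem lemma4p7 (R : realType) (n : nat) (J : 'M[R]_n)
  (G : set 'M[R]_(n + 1)) :
  nondeg_sym J ->
  G `<=` Iso J -> is_subgroup G -> zariski_closed G ->
  transitive_on_Rn (centralizer_in_Iso J G) ->
  forall p : 'cV[R]_n,
    (forall U V, derived_alg (lie_alg G) U -> derived_alg (lie_alg G) V ->
       orbit_form J p U V = 0) /\
    (forall Z U, center_alg (lie_alg G) Z -> derived_alg (lie_alg G) U ->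
       orbit_form J p Z U = 0).
Proof.
move=> [hJs hJu] GI _ _ htr p; split.
- move=> U V [k [c [X [Y [hXY ->]]]]] [k' [c' [X' [Y' [hXY' ->]]]]].
  change (bform J (@Vf R n (\sum_(i < k) c i *: lie_bracket (X i) (Y i)) p)
                  (@Vf R n (\sum_(i < k') c' i *: lie_bracket (X' i) (Y' i)) p) = 0).
  rewrite !Vf_sum bf_suml; apply: big1 => i _.
  rewrite bf_sumr big1 ?mulr0 // => j _.
  have gX := lie_good GI (hXY i).1; have gY := lie_good GI (hXY i).2.
  have gX' := lie_good GI (hXY' j).1; have gY' := lie_good GI (hXY' j).2.
  rewrite (inv_form hJs hJu htr _ _ gX gY) (two_step hJs hJu htr _ gX gX' gY').
  by rewrite bform0r mulr0 oppr0 mulr0.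
- move=> Z U [gZ0 hZ] [k [c [X [Y [hXY ->]]]]].
  have gZ := lie_good GI gZ0.
  change (bform J (@Vf R n Z p) (@Vf R n (\sum_(i < k) c i *: lie_bracket (X i) (Y i)) p) = 0).
  rewrite Vf_sum bf_sumr; apply: big1 => i _.
  have gX := lie_good GI (hXY i).1; have gY := lie_good GI (hXY i).2.
  rewrite (bform_sym _ hJs) (inv_form hJs hJu htr _ _ gX gY).
  rewrite (central_zero hJs hJu htr _ gZ gX (hZ _ (hXY i).1)).
  by rewrite bform0r mulr0 oppr0 mulr0.
Qed.
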